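(* Let $\lambda\in ba(\mathcal A)$, $\mathscr M\subset ba(\mathcal A,\lambda)$, and let $\mathscr H_0\subset\mathcal A$ generate the ring $\mathscr H$. There exist $H_1,H_2,\ldots\in\mathscr H_0$ such that, with $G_n=H_n\setminus\bigcup_{k<n}H_k$ and $G=\bigcap_nH_n^c$, $$|\mu|^*(H\cap G)=0\quad\text{and}\quad\mu(A\cap H)=\sum_n\mu(A\cap H\cap G_n)\qquad\mu\in\mathscr M,\ A\in\mathcal A,\ H\in\mathscr H.$$ Moreover: (i) if $\mu\in\mathscr M$ is $\mathscr H_0$-inner regular, then $\mu(A)=\sum_n\mu(A\cap G_n)$ for all $A\in\mathcal A$; (ii) if $\mathscr H_0$ is closed under countable unions, then $\mu(A)=\mu(A\cap G)+\sum_n\mu(A\cap G_n)$ for all $\mu\in\mathscr M$, $A\in\mathcal A$.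
   Context: $\mathcal A$ algebra of subsets of $\Omega$; $ba(\mathcal A)$ bounded finitely additive real set functions, $|\mu|$ total variation, $\mu^+,\mu^-$ positive and negative parts. $ba(\mathcal A,\lambda)=\{\mu:\mu\ll\lambda\}$, where $\mu\ll\lambda$ means for every $\varepsilon>0$ there is $\delta>0$ with $|\lambda|(A)<\delta\Rightarrow|\mu|(A)<\varepsilon$. $|\mu|^*(E)=\inf\{|\mu|(A):A\in\mathcal A,\ E\subset A\}$ is the outer measure for $E\subset\Omega$. $\mu$ is $\mathscr H_0$-inner regular if $\mu^+(A)=\sup\{\mu(H):H\in\mathscr H_0,\ H\subset A\}$ and $\mu^-(A)=\sup\{-\mu(H):H\in\mathscr H_0,\ H\subset A\}$ for all $A\in\mathcal A$. *)

(* Defs.v *)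
From Stdlib Require Import Reals List ClassicalEpsilon.
Open Scope R_scope.

Definition set (T : Type) := T -> Prop.

Definition setI {T} (A B : set T) : set T := fun x => A x /\ B x.
Definition setU {T} (A B : set T) : set T := fun x => A x \/ B x.
Definition setD {T} (A B : set T) : set T := fun x => A x /\ ~ B x.
Definition setC {T} (A : set T) : set T := fun x => ~ A x.
Definition set0 {T} : set T := fun _ => False.
Definition setT {T} : set T := fun _ => True.
Definition subset {T} (A B : set T) : Prop := forall x, A x -> B x.
Definition disjoint {T} (A B : set T) : Prop := forall x, A x -> B x -> False.

Definition is_algebra {T} (Alg : set T -> Prop) : Prop :=
  Alg setT /\ (forall A, Alg A -> Alg (setC A)) /\
  (forall A B, Alg A -> Alg B -> Alg (setU A B)).

Definition is_ring {T} (Rg : set T -> Prop) : Prop :=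
  Rg set0 /\ (forall A B, Rg A -> Rg B -> Rg (setU A B)) /\
  (forall A B, Rg A -> Rg B -> Rg (setD A B)).

Definition gen_ring {T} (H0 : set T -> Prop) (H : set T) : Prop :=
  forall Rg, is_ring Rg -> (forall X, H0 X -> Rg X) -> Rg H.

Definition is_ba {T} (Alg : set T -> Prop) (mu : set T -> R) : Prop :=
  (forall A B, Alg A -> Alg B -> disjoint A B -> mu (setU A B) = mu A + mu B) /\
  (exists K, forall A, Alg A -> Rabs (mu A) <= K).

(* Supremum / infimum of a set of reals (chosen; meaningful when they exist). *)
Definition is_glb (E : R -> Prop) (m : R) : Prop :=
  (forall x, E x -> m <= x) /\ (forall b, (forall x, E x -> b <= x) -> b <= m).
Definition Rsup (E : R -> Prop) : R := epsilon (inhabits 0) (fun m => is_lub E m).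
Definition Rinf (E : R -> Prop) : R := epsilon (inhabits 0) (fun m => is_glb E m).

Definition is_partition {T} (Alg : set T -> Prop) (A : set T) (l : list (set T)) : Prop :=
  Forall Alg l /\
  (forall x, A x <-> exists B, In B l /\ B x) /\
  (forall i j, (i < length l)%nat -> (j < length l)%nat -> i <> j ->
     disjoint (nth i l set0) (nth j l set0)).

Definition totvar {T} (Alg : set T -> Prop) (mu : set T -> R) (A : set T) : R :=
  Rsup (fun r => exists l, is_partition Alg A l /\
                  r = fold_right Rplus 0 (map (fun B => Rabs (mu B)) l)).

Definition mu_pos {T} (Alg : set T -> Prop) (mu : set T -> R) (A : set T) : R :=
  Rsup (fun r => exists B, Alg B /\ subset B A /\ r = mu B).
Definition mu_neg {T} (Alg : set T -> Prop) (mu : set T -> R) (A : set T) : R :=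
  Rsup (fun r => exists B, Alg B /\ subset B A /\ r = - mu B).

Definition abs_cont {T} (Alg : set T -> Prop) (mu lam : set T -> R) : Prop :=
  forall eps, eps > 0 -> exists delta, delta > 0 /\
    forall A, Alg A -> totvar Alg lam A < delta -> totvar Alg mu A < eps.

Definition outer {T} (Alg : set T -> Prop) (mu : set T -> R) (E : set T) : R :=
  Rinf (fun r => exists A, Alg A /\ subset E A /\ r = totvar Alg mu A).

Definition inner_regular {T} (Alg H0 : set T -> Prop) (mu : set T -> R) : Prop :=
  forall A, Alg A ->
    is_lub (fun r => exists H, H0 H /\ subset H A /\ r = mu H) (mu_pos Alg mu A) /\
    is_lub (fun r => exists H, H0 H /\ subset H A /\ r = - mu H) (mu_neg Alg mu A).

Definition Gn {T} (Hs : nat -> set T) (n : nat) : set T :=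
  fun x => Hs n x /\ ~ (exists k, (k < n)%nat /\ Hs k x).
Definition Gset {T} (Hs : nat -> set T) : set T := fun x => forall n, ~ Hs n x.

(* Main.v *)
Require Import Defs.
From Stdlib Require Import Reals Lra Lia List Classical FunctionalExtensionality PropExtensionality ClassicalEpsilon.
Open Scope R_scope.

Lemma set_ext {T} (A B : set T) : (forall x, A x <-> B x) -> A = B.
Proof. intros H; apply functional_extensionality; intros x; apply propositional_extensionality; auto. Qed.

Lemma alg_C {T} (Alg : set T -> Prop) A : is_algebra Alg -> Alg A -> Alg (setC A).
Proof. intros [_ [h _]]; auto. Qed.
Lemma alg_U {T} (Alg : set T -> Prop) A B : is_algebra Alg -> Alg A -> Alg B -> Alg (setU A B).
Proof. intros [_ [_ h]]; auto. Qed.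
Lemma alg_I {T} (Alg : set T -> Prop) A B : is_algebra Alg -> Alg A -> Alg B -> Alg (setI A B).
Proof.
  intros HA a b.
  replace (setI A B) with (setC (setU (setC A) (setC B))).
  - apply alg_C; auto; apply (alg_U Alg); auto; apply alg_C; auto.
  - apply set_ext; intro x; unfold setC, setU, setI; tauto.
Qed.
Lemma alg_D {T} (Alg : set T -> Prop) A B : is_algebra Alg -> Alg A -> Alg B -> Alg (setD A B).
Proof.
  intros HA a b. replace (setD A B) with (setI A (setC B)).
  - apply (alg_I Alg); auto; apply alg_C; auto.
  - apply set_ext; intro x; unfold setC, setD, setI; tauto.
Qed.
Lemma alg_0 {T} (Alg : set T -> Prop) : is_algebra Alg -> Alg set0.
Proof.
  intros HA. replace set0 with (setC (@setT T)).
  - apply alg_C; auto. destruct HA; auto.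
  - apply set_ext; intro x; unfold setC, setT, set0; tauto.
Qed.

Lemma ba_0 {T} (Alg : set T -> Prop) nu : is_algebra Alg -> is_ba Alg nu -> nu set0 = 0.
Proof.
  intros HA [Hadd _].
  assert (E : setU (@set0 T) set0 = set0) by (apply set_ext; unfold setU, set0; tauto).
  pose proof (Hadd set0 set0 (alg_0 _ HA) (alg_0 _ HA)) as h.
  rewrite E in h. assert (nu set0 = nu set0 + nu set0) by (apply h; intros x []). lra.
Qed.

Lemma ba_neg {T} (Alg : set T -> Prop) nu : is_ba Alg nu -> is_ba Alg (fun B => - nu B).
Proof.
  intros [Hadd [K HK]]. split.
  - intros A B a b d. rewrite Hadd; auto. lra.
  - exists K. intros A a. rewrite Rabs_Ropp. auto.
Qed.

Lemma Rsup_lub (E : R -> Prop) : (exists b, forall x, E x -> x <= b) -> (exists x, E x) -> is_lub E (Rsup E).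
Proof.
  intros [b Hb] Hne. unfold Rsup. apply epsilon_spec.
  destruct (completeness E) as [m Hm]; [exists b; exact Hb | exact Hne |]. exists m; exact Hm.
Qed.

Lemma abs_bnd a b : Rabs a <= b -> - b <= a /\ a <= b.
Proof. intros h. destruct (Rcase_abs a); [rewrite Rabs_left in h|rewrite Rabs_right in h]; auto; lra. Qed.

Lemma mp_lub {T} (Alg : set T -> Prop) nu A : is_algebra Alg -> is_ba Alg nu -> Alg A ->
  is_lub (fun r => exists B, Alg B /\ subset B A /\ r = nu B) (mu_pos Alg nu A).
Proof.
  intros HA Hb a. unfold mu_pos. apply Rsup_lub.
  - destruct Hb as [_ [K HK]]. exists K. intros x [B [b [_ ->]]].
    specialize (HK B b). apply abs_bnd in HK; destruct HK; lra.
  - exists (nu A). exists A. repeat split; auto. intros x h; exact h.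
Qed.

Lemma mp_ge {T} (Alg : set T -> Prop) nu A B : is_algebra Alg -> is_ba Alg nu -> Alg A -> Alg B ->
  subset B A -> nu B <= mu_pos Alg nu A.
Proof. intros HA Hb a b s. apply (mp_lub _ _ _ HA Hb a). exists B; auto. Qed.

Lemma mp_le {T} (Alg : set T -> Prop) nu A c : is_algebra Alg -> is_ba Alg nu -> Alg A ->
  (forall B, Alg B -> subset B A -> nu B <= c) -> mu_pos Alg nu A <= c.
Proof. intros HA Hb a h. apply (mp_lub _ _ _ HA Hb a). intros x [B [b [s ->]]]. auto. Qed.

Lemma mp_nonneg {T} (Alg : set T -> Prop) nu A : is_algebra Alg -> is_ba Alg nu -> Alg A ->
  0 <= mu_pos Alg nu A.
Proof.
  intros HA Hb a. rewrite <- (ba_0 _ _ HA Hb). apply mp_ge; auto. apply (alg_0 Alg); auto.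
  intros x [].
Qed.

Lemma mp_bound {T} (Alg : set T -> Prop) nu K A : is_algebra Alg -> is_ba Alg nu -> Alg A ->
  (forall B, Alg B -> Rabs (nu B) <= K) -> mu_pos Alg nu A <= K.
Proof.
  intros HA Hb a HK. apply mp_le; auto. intros B b _. specialize (HK B b).
  apply abs_bnd in HK; destruct HK; lra.
Qed.

Lemma mp_mono {T} (Alg : set T -> Prop) nu A B : is_algebra Alg -> is_ba Alg nu -> Alg A -> Alg B ->
  subset B A -> mu_pos Alg nu B <= mu_pos Alg nu A.
Proof.
  intros HA Hb a b s. apply mp_le; auto. intros C c sc. apply mp_ge; auto.
  intros x h; auto.
Qed.

Lemma mp_add {T} (Alg : set T -> Prop) nu A1 A2 : is_algebra Alg -> is_ba Alg nu -> Alg A1 -> Alg A2 ->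
  disjoint A1 A2 -> mu_pos Alg nu (setU A1 A2) = mu_pos Alg nu A1 + mu_pos Alg nu A2.
Proof.
  intros HA Hb a1 a2 d. pose proof Hb as [Hadd _].
  assert (a12 : Alg (setU A1 A2)) by (apply (alg_U Alg); auto).
  apply Rle_antisym.
  - apply mp_le; auto. intros B b s.
    assert (E : B = setU (setI B A1) (setI B A2)).
    { apply set_ext; intro x; unfold setU, setI; split.
      - intro h. destruct (s x h); tauto.
      - tauto. }
    rewrite E, Hadd.
    + apply Rplus_le_compat; apply mp_ge; auto.
      * apply (alg_I Alg); auto.
      * intros x [_ h]; exact h.
      * apply (alg_I Alg); auto.
      * intros x [_ h]; exact h.
    + apply (alg_I Alg); auto.
    + apply (alg_I Alg); auto.
    + intros x [_ h1] [_ h2]. exact (d x h1 h2).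
  - assert (forall B2, Alg B2 -> subset B2 A2 -> mu_pos Alg nu A1 <= mu_pos Alg nu (setU A1 A2) - nu B2).
    { intros B2 b2 s2. apply mp_le; auto. intros B1 b1 s1.
      assert (nu (setU B1 B2) <= mu_pos Alg nu (setU A1 A2)).
      { apply mp_ge; auto. apply (alg_U Alg); auto. intros x [h|h]; [left; auto | right; auto]. }
      rewrite Hadd in H; auto; try lra. intros x h1 h2. exact (d x (s1 x h1) (s2 x h2)). }
    assert (mu_pos Alg nu A2 <= mu_pos Alg nu (setU A1 A2) - mu_pos Alg nu A1).
    { apply mp_le; auto. intros B2 b2 s2. specialize (H B2 b2 s2). lra. }
    lra.
Qed.

Lemma part_sum {T} (Alg : set T -> Prop) nu (l : list (set T)) : is_algebra Alg -> is_ba Alg nu ->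
  Forall Alg l ->
  (forall i j, (i < length l)%nat -> (j < length l)%nat -> i <> j -> disjoint (nth i l set0) (nth j l set0)) ->
  exists B C, Alg B /\ Alg C /\ subset B (fun x => exists P, In P l /\ P x) /\
     subset C (fun x => exists P, In P l /\ P x) /\
     fold_right Rplus 0 (map (fun P => Rabs (nu P)) l) = nu B - nu C.
Proof.
  intros HA Hb. pose proof Hb as [Hadd _]. induction l as [|P l IH]; intros Hf Hd.
  - exists set0, set0. split; [apply (alg_0 Alg); auto|]. split; [apply (alg_0 Alg); auto|]. split; [intros x []|]. split; [intros x []|]. simpl. ring.
  - inversion Hf as [|? ? hP hl]; subst.
    destruct IH as [B [C [b [c [sb [sc e]]]]]]; auto.
    { intros i j hi hj ne. apply (Hd (S i) (S j)); simpl; lia. }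
    assert (dP : forall D, subset D (fun x => exists P, In P l /\ P x) -> disjoint P D).
    { intros D sD x hx hD. destruct (sD x hD) as [Q [iQ hQ]].
      destruct (In_nth l Q set0 iQ) as [j [hj ej]].
      refine (Hd 0%nat (S j) _ _ _ x _ _); simpl; try lia. exact hx. rewrite ej; exact hQ. }
    simpl. rewrite e.
    destruct (Rle_dec 0 (nu P)) as [hp|hn].
    + exists (setU P B), C. repeat split.
      * apply (alg_U Alg); auto.
      * auto.
      * intros x [h|h]; [exists P; simpl; auto|]. destruct (sb x h) as [Q [i q]]; exists Q; simpl; auto.
      * intros x h. destruct (sc x h) as [Q [i q]]; exists Q; simpl; auto.
      * rewrite Hadd; auto. rewrite Rabs_right; lra.
    + exists B, (setU P C). repeat split.
      * auto.
      * apply (alg_U Alg); auto.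
      * intros x h. destruct (sb x h) as [Q [i q]]; exists Q; simpl; auto.
      * intros x [h|h]; [exists P; simpl; auto|]. destruct (sc x h) as [Q [i q]]; exists Q; simpl; auto.
      * rewrite Hadd; auto. rewrite Rabs_left; lra.
Qed.

Lemma single_part {T} (Alg : set T -> Prop) A : Alg A -> is_partition Alg A (A :: nil).
Proof.
  intros a. split; [constructor; auto|]. split.
  - intros x; split; [intro h; exists A; simpl; auto | intros [B [[<-|[]] h]]; auto].
  - intros i j hi hj ne. simpl in hi, hj. lia.
Qed.

Lemma tv_lub {T} (Alg : set T -> Prop) nu A : is_algebra Alg -> is_ba Alg nu -> Alg A ->
  is_lub (fun r => exists l, is_partition Alg A l /\
                  r = fold_right Rplus 0 (map (fun B => Rabs (nu B)) l)) (totvar Alg nu A).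
Proof.
  intros HA Hb a. unfold totvar. apply Rsup_lub.
  - pose proof Hb as [_ [K HK]]. exists (2*K). intros r [l [[hf [hc hd]] ->]].
    destruct (part_sum Alg nu l HA Hb hf hd) as [B [C [b [c [_ [_ e]]]]]]. rewrite e.
    pose proof (HK B b); pose proof (HK C c).
    apply abs_bnd in H; destruct H; apply abs_bnd in H0; destruct H0; lra.
  - exists (Rabs (nu A) + 0). exists (A :: nil). split; [apply single_part; auto | reflexivity].
Qed.

Lemma tv_le_u {T} (Alg : set T -> Prop) nu A : is_algebra Alg -> is_ba Alg nu -> Alg A ->
  totvar Alg nu A <= mu_pos Alg nu A + mu_neg Alg nu A.
Proof.
  intros HA Hb a. apply (tv_lub _ _ _ HA Hb a). intros r [l [[hf [hc hd]] ->]].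
  destruct (part_sum Alg nu l HA Hb hf hd) as [B [C [b [c [sb [sc e]]]]]]. rewrite e.
  assert (nu B <= mu_pos Alg nu A).
  { apply mp_ge; auto. intros x h. apply hc. auto. }
  assert (- nu C <= mu_neg Alg nu A).
  { change (mu_neg Alg nu A) with (mu_pos Alg (fun B => - nu B) A).
    apply (mp_ge Alg (fun B => - nu B)); auto. apply ba_neg; auto. intros x h. apply hc. auto. }
  lra.
Qed.

Lemma abs_le_tv {T} (Alg : set T -> Prop) nu A : is_algebra Alg -> is_ba Alg nu -> Alg A ->
  Rabs (nu A) <= totvar Alg nu A.
Proof.
  intros HA Hb a. replace (Rabs (nu A)) with (Rabs (nu A) + 0) by ring.
  apply (tv_lub _ _ _ HA Hb a). exists (A :: nil). split; [apply single_part; auto | reflexivity].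
Qed.

Lemma tv_nonneg {T} (Alg : set T -> Prop) nu A : is_algebra Alg -> is_ba Alg nu -> Alg A ->
  0 <= totvar Alg nu A.
Proof. intros. eapply Rle_trans; [apply Rabs_pos | apply abs_le_tv; auto]. Qed.

Lemma mn_eq {T} (Alg : set T -> Prop) lam A : mu_neg Alg lam A = mu_pos Alg (fun B => - lam B) A.
Proof. reflexivity. Qed.

Definition uu {T} (Alg : set T -> Prop) lam A := mu_pos Alg lam A + mu_neg Alg lam A.

Lemma u_nonneg {T} (Alg : set T -> Prop) lam A : is_algebra Alg -> is_ba Alg lam -> Alg A -> 0 <= uu Alg lam A.
Proof.
  intros HA Hb a. unfold uu. pose proof (mp_nonneg _ _ _ HA Hb a).
  pose proof (mp_nonneg _ _ _ HA (ba_neg _ _ Hb) a). rewrite ?mn_eq. lra.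
Qed.

Lemma u_bound {T} (Alg : set T -> Prop) lam : is_algebra Alg -> is_ba Alg lam ->
  exists K, forall A, Alg A -> uu Alg lam A <= K.
Proof.
  intros HA Hb. pose proof Hb as [_ [K HK]]. exists (2*K). intros A a. unfold uu.
  pose proof (mp_bound _ _ K _ HA Hb a HK).
  assert (mu_neg Alg lam A <= K).
  { apply (mp_bound _ (fun B => - lam B)); auto. apply ba_neg; auto.
    intros B b; rewrite Rabs_Ropp; auto. }
  lra.
Qed.

Lemma u_mono {T} (Alg : set T -> Prop) lam A B : is_algebra Alg -> is_ba Alg lam -> Alg A -> Alg B ->
  subset B A -> uu Alg lam B <= uu Alg lam A.
Proof.
  intros HA Hb a b s. unfold uu. pose proof (mp_mono _ _ _ _ HA Hb a b s).
  pose proof (mp_mono _ _ _ _ HA (ba_neg _ _ Hb) a b s). rewrite ?mn_eq. lra.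
Qed.

Lemma u_add {T} (Alg : set T -> Prop) lam A B : is_algebra Alg -> is_ba Alg lam -> Alg A -> Alg B ->
  disjoint A B -> uu Alg lam (setU A B) = uu Alg lam A + uu Alg lam B.
Proof.
  intros HA Hb a b d. unfold uu. rewrite (mp_add _ _ _ _ HA Hb a b d).
  rewrite ?mn_eq. rewrite (mp_add _ (fun B => - lam B) _ _ HA (ba_neg _ _ Hb) a b d). ring.
Qed.

Lemma u_0 {T} (Alg : set T -> Prop) lam : is_algebra Alg -> is_ba Alg lam -> uu Alg lam set0 = 0.
Proof.
  intros HA Hb. pose proof (u_add Alg lam set0 set0 HA Hb (alg_0 _ HA) (alg_0 _ HA)).
  replace (setU (@set0 T) set0) with (@set0 T) in H by (apply set_ext; unfold setU, set0; tauto).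
  assert (uu Alg lam set0 = uu Alg lam set0 + uu Alg lam set0) by (apply H; intros x []). lra.
Qed.

Definition Hyp {T} (Alg : set T -> Prop) lam (H0 : set T -> Prop) :=
  is_algebra Alg /\ is_ba Alg lam /\ (forall X, H0 X -> Alg X) /\ (exists X, H0 X).

Definition stepY {T} (Alg : set T -> Prop) lam (H0 : set T -> Prop) U n :=
  epsilon (inhabits set0) (fun Y => H0 Y /\ forall X, H0 X ->
     uu Alg lam (setD X U) <= uu Alg lam (setD Y U) + / INR (S n)).

Fixpoint Useq {T} (Alg : set T -> Prop) lam (H0 : set T -> Prop) n : set T :=
  match n with
  | O => set0
  | S n => setU (Useq Alg lam H0 n) (stepY Alg lam H0 (Useq Alg lam H0 n) n)
  end.

Definition Hseq {T} (Alg : set T -> Prop) lam (H0 : set T -> Prop) n :=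
  stepY Alg lam H0 (Useq Alg lam H0 n) n.

Lemma step_spec {T} (Alg : set T -> Prop) lam H0 U n : Hyp Alg lam H0 -> Alg U ->
  H0 (stepY Alg lam H0 U n) /\ forall X, H0 X ->
     uu Alg lam (setD X U) <= uu Alg lam (setD (stepY Alg lam H0 U n) U) + / INR (S n).
Proof.
  intros [HA [Hb [HH [X0 hX0]]]] hU. unfold stepY. apply epsilon_spec.
  destruct (u_bound _ _ HA Hb) as [K HK].
  set (E := fun r => exists X, H0 X /\ r = uu Alg lam (setD X U)).
  destruct (completeness E) as [m [hm1 hm2]].
  - exists K. intros r [X [hX ->]]. apply HK. apply (alg_D Alg); auto.
  - exists (uu Alg lam (setD X0 U)), X0; auto.
  - assert (ep : 0 < / INR (S n)) by (apply Rinv_0_lt_compat; apply lt_0_INR; lia).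
    destruct (classic (exists Y, H0 Y /\ m - / INR (S n) < uu Alg lam (setD Y U))) as [[Y [hY hl]]|hn].
    + exists Y. split; auto. intros X hX.
      assert (uu Alg lam (setD X U) <= m) by (apply hm1; exists X; auto). lra.
    + exfalso. assert (m <= m - / INR (S n)); [|lra].
      apply hm2. intros r [X [hX ->]]. apply Rnot_lt_le. intro h. apply hn. exists X; auto.
Qed.

Lemma Useq_alg {T} (Alg : set T -> Prop) lam H0 n : Hyp Alg lam H0 -> Alg (Useq Alg lam H0 n).
Proof.
  intros Hy. pose proof Hy as [HA [Hb [HH _]]]. induction n; simpl.
  - apply (alg_0 Alg); auto.
  - apply (alg_U Alg); auto. apply HH. apply (step_spec _ _ _ _ n Hy IHn).
Qed.

Lemma Hseq_H0 {T} (Alg : set T -> Prop) lam H0 n : Hyp Alg lam H0 -> H0 (Hseq Alg lam H0 n).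
Proof. intros Hy. apply (step_spec _ _ _ _ n Hy (Useq_alg _ _ _ n Hy)). Qed.

Lemma Hseq_alg {T} (Alg : set T -> Prop) lam H0 n : Hyp Alg lam H0 -> Alg (Hseq Alg lam H0 n).
Proof. intros Hy. pose proof Hy as [_ [_ [HH _]]]. apply HH, Hseq_H0, Hy. Qed.

Lemma Useq_char {T} (Alg : set T -> Prop) lam H0 n x :
  Useq Alg lam H0 n x <-> exists k, (k < n)%nat /\ Hseq Alg lam H0 k x.
Proof.
  induction n; simpl.
  - split; [intros [] | intros [k [h _]]; lia].
  - unfold setU. rewrite IHn. split.
    + intros [[k [hk h]]|h]; [exists k; split; auto; lia | exists n; split; auto].
    + intros [k [hk h]]. destruct (Nat.eq_dec k n) as [->|ne]; [right; exact h|].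
      left; exists k; split; auto; lia.
Qed.

Lemma Gn_eq {T} (Alg : set T -> Prop) lam H0 n :
  Gn (Hseq Alg lam H0) n = setD (Hseq Alg lam H0 n) (Useq Alg lam H0 n).
Proof. apply set_ext; intro x. unfold Gn, setD. rewrite Useq_char. tauto. Qed.

Lemma Useq_S {T} (Alg : set T -> Prop) lam H0 n :
  Useq Alg lam H0 (S n) = setU (Useq Alg lam H0 n) (Gn (Hseq Alg lam H0) n).
Proof.
  rewrite Gn_eq. apply set_ext; intro x. simpl. fold (Hseq Alg lam H0 n). unfold setU, setD.
  split; [intros [h|h]; [left; auto | destruct (classic (Useq Alg lam H0 n x)); auto] | tauto].
Qed.

Lemma Gn_alg {T} (Alg : set T -> Prop) lam H0 n : Hyp Alg lam H0 -> Alg (Gn (Hseq Alg lam H0) n).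
Proof.
  intros Hy. pose proof Hy as [HA _]. rewrite Gn_eq. apply (alg_D Alg); auto.
  apply Hseq_alg; auto. apply Useq_alg; auto.
Qed.

Lemma Gn_disj {T} (Alg : set T -> Prop) lam H0 n : disjoint (Useq Alg lam H0 n) (Gn (Hseq Alg lam H0) n).
Proof. rewrite Gn_eq. intros x h [_ h']. auto. Qed.

Lemma a_S {T} (Alg : set T -> Prop) lam H0 n : Hyp Alg lam H0 ->
  uu Alg lam (Useq Alg lam H0 (S n)) = uu Alg lam (Useq Alg lam H0 n) + uu Alg lam (Gn (Hseq Alg lam H0) n).
Proof.
  intros Hy. pose proof Hy as [HA [Hb _]]. rewrite Useq_S. apply u_add; auto.
  apply Useq_alg; auto. apply Gn_alg; auto. apply Gn_disj.
Qed.

Lemma a_mono {T} (Alg : set T -> Prop) lam H0 n m : Hyp Alg lam H0 -> (n <= m)%nat ->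
  uu Alg lam (Useq Alg lam H0 n) <= uu Alg lam (Useq Alg lam H0 m).
Proof.
  intros Hy h. pose proof Hy as [HA [Hb _]]. induction h; [lra|].
  rewrite a_S; auto. pose proof (u_nonneg Alg lam _ HA Hb (Gn_alg _ _ _ m Hy)). lra.
Qed.

Lemma incr_small {T} (Alg : set T -> Prop) lam H0 : Hyp Alg lam H0 ->
  forall eps, 0 < eps -> exists N, forall n, (N <= n)%nat -> uu Alg lam (Gn (Hseq Alg lam H0) n) < eps.
Proof.
  intros Hy eps he. pose proof Hy as [HA [Hb _]].
  destruct (u_bound _ _ HA Hb) as [K HK].
  set (E := fun r => exists n, r = uu Alg lam (Useq Alg lam H0 n)).
  destruct (completeness E) as [L [hL1 hL2]].
  - exists K. intros r [n ->]. apply HK, Useq_alg, Hy.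
  - exists (uu Alg lam (Useq Alg lam H0 0)), 0%nat; auto.
  - destruct (classic (exists N, L - eps < uu Alg lam (Useq Alg lam H0 N))) as [[N hN]|hn].
    + exists N. intros n hn.
      pose proof (a_S _ _ _ n Hy). pose proof (a_mono _ _ _ N n Hy hn).
      assert (uu Alg lam (Useq Alg lam H0 (S n)) <= L) by (apply hL1; exists (S n); auto).
      lra.
    + exfalso. assert (L <= L - eps); [|lra]. apply hL2. intros r [n ->].
      apply Rnot_lt_le. intro h. apply hn. exists n; auto.
Qed.

Lemma unif {T} (Alg : set T -> Prop) lam H0 : Hyp Alg lam H0 ->
  forall d, 0 < d -> exists N, forall n, (N <= n)%nat -> forall X, H0 X ->
    uu Alg lam (setD X (Useq Alg lam H0 n)) < d.
Proof.
  intros Hy d hd. destruct (incr_small _ _ _ Hy (d/2)) as [N1 h1]; [lra|].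
  destruct (archimed_cor1 (d/2)) as [N2 [h2 h2']]; [lra|].
  exists (max N1 N2). intros n hn X hX.
  destruct (step_spec Alg lam H0 (Useq Alg lam H0 n) n Hy (Useq_alg _ _ _ n Hy)) as [_ hs].
  specialize (hs X hX). fold (Hseq Alg lam H0 n) in hs. rewrite <- Gn_eq in hs.
  specialize (h1 n ltac:(lia)).
  assert (/ INR (S n) <= / INR N2).
  { apply Rinv_le_contravar. apply lt_0_INR; auto. apply le_INR; lia. }
  lra.
Qed.

Definition good {T} (Alg : set T -> Prop) lam H0 (B : set T) :=
  Alg B /\ forall d, 0 < d -> exists N, forall n, (N <= n)%nat -> uu Alg lam (setD B (Useq Alg lam H0 n)) < d.

Lemma good_ring {T} (Alg : set T -> Prop) lam H0 : Hyp Alg lam H0 -> is_ring (good Alg lam H0).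
Proof.
  intros Hy. pose proof Hy as [HA [Hb _]].
  assert (hU : forall n, Alg (Useq Alg lam H0 n)) by (intro n; apply Useq_alg; auto).
  split; [|split].
  - split; [apply (alg_0 Alg); auto|]. intros d hd. exists 0%nat. intros n _.
    replace (setD set0 (Useq Alg lam H0 n)) with (@set0 T) by (apply set_ext; unfold setD, set0; tauto).
    rewrite u_0; auto.
  - intros B C [b hB] [c hC]. split; [apply (alg_U Alg); auto|]. intros d hd.
    destruct (hB (d/2)) as [N1 h1]; [lra|]. destruct (hC (d/2)) as [N2 h2]; [lra|].
    exists (max N1 N2). intros n hn. specialize (h1 n ltac:(lia)). specialize (h2 n ltac:(lia)).
    set (U := Useq Alg lam H0 n) in *. assert (hUn : Alg U) by apply hU.
    replace (setD (setU B C) U) with (setU (setD B U) (setD (setD C U) B)).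
    + rewrite u_add; auto; try (repeat apply (alg_D Alg); auto).
      * assert (uu Alg lam (setD (setD C U) B) <= uu Alg lam (setD C U)).
        { apply u_mono; auto; try (repeat apply (alg_D Alg); auto). intros x [h _]; auto. }
        lra.
      * intros x [h1' _] [_ h2']. auto.
    + apply set_ext; intro x; unfold setU, setD. split; [tauto|].
      intros [[h|h] h']; [left; auto|]. destruct (classic (B x)); [left|right]; tauto.
  - intros B C [b hB] [c hC]. split; [apply (alg_D Alg); auto|]. intros d hd.
    destruct (hB d hd) as [N h1]. exists N. intros n hn. specialize (h1 n hn).
    eapply Rle_lt_trans; [|exact h1]. apply u_mono; auto; try (repeat apply (alg_D Alg); auto).
    intros x [[h _] h']. split; auto.
Qed.

Lemma gen_good {T} (Alg : set T -> Prop) lam H0 H : Hyp Alg lam H0 -> gen_ring H0 H -> good Alg lam H0 H.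
Proof.
  intros Hy hg. apply hg. apply good_ring; auto. intros X hX. pose proof Hy as [HA [Hb [HH _]]].
  split; auto. intros d hd. destruct (unif _ _ _ Hy d hd) as [N hN]. exists N. intros n hn. auto.
Qed.

Lemma Rinf_eq (E : R -> Prop) m : is_glb E m -> Rinf E = m.
Proof.
  intros h. unfold Rinf. assert (h' : is_glb E (epsilon (inhabits 0) (fun m => is_glb E m))).
  { apply epsilon_spec. exists m; auto. }
  destruct h as [h1 h2], h' as [h1' h2']. apply Rle_antisym; auto.
Qed.

Lemma partial_sum {T} (Alg : set T -> Prop) lam H0 mu C : Hyp Alg lam H0 -> is_ba Alg mu -> Alg C ->
  forall n, mu (setI C (Useq Alg lam H0 (S n))) =
            sum_f_R0 (fun k => mu (setI C (Gn (Hseq Alg lam H0) k))) n.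
Proof.
  intros Hy Hm c. pose proof Hy as [HA _]. pose proof Hm as [Hadd _].
  assert (st : forall m, mu (setI C (Useq Alg lam H0 (S m))) =
     mu (setI C (Useq Alg lam H0 m)) + mu (setI C (Gn (Hseq Alg lam H0) m))).
  { intro m. rewrite Useq_S.
    replace (setI C (setU (Useq Alg lam H0 m) (Gn (Hseq Alg lam H0) m))) with
      (setU (setI C (Useq Alg lam H0 m)) (setI C (Gn (Hseq Alg lam H0) m)))
      by (apply set_ext; intro x; unfold setI, setU; tauto).
    apply Hadd; try (apply (alg_I Alg); auto; try apply Useq_alg; try apply Gn_alg; auto).
    intros x [_ h1] [_ h2]. exact (Gn_disj _ _ _ m x h1 h2). }
  induction n.
  - rewrite st. simpl. replace (setI C (@set0 T)) with (@set0 T)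
      by (apply set_ext; intro x; unfold setI, set0; tauto).
    rewrite (ba_0 _ _ HA Hm). ring.
  - rewrite st, IHn. simpl. ring.
Qed.

Lemma sum_conv {T} (Alg : set T -> Prop) lam H0 mu C : Hyp Alg lam H0 -> is_ba Alg mu -> Alg C ->
  (forall eps, 0 < eps -> exists N, forall n, (N <= n)%nat -> Rabs (mu (setD C (Useq Alg lam H0 n))) < eps) ->
  infinite_sum (fun k => mu (setI C (Gn (Hseq Alg lam H0) k))) (mu C).
Proof.
  intros Hy Hm c hd eps he. pose proof Hy as [HA _]. pose proof Hm as [Hadd _].
  destruct (hd eps he) as [N hN]. exists N. intros n hn. unfold R_dist.
  rewrite <- (partial_sum _ _ _ _ _ Hy Hm c).
  set (U := Useq Alg lam H0 (S n)). assert (hU : Alg U) by apply Useq_alg, Hy.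
  replace (mu C) with (mu (setI C U) + mu (setD C U)).
  - replace (mu (setI C U) - (mu (setI C U) + mu (setD C U))) with (- mu (setD C U)) by ring.
    rewrite Rabs_Ropp. apply hN. lia.
  - assert (E : C = setU (setI C U) (setD C U)).
    { apply set_ext; intro x; unfold setU, setI, setD. destruct (classic (U x)); tauto. }
    rewrite E at 3. symmetry. apply Hadd.
    + apply (alg_I Alg); auto.
    + apply (alg_D Alg); auto.
    + intros x [_ h1] [_ h2]; auto.
Qed.

Theorem mainTheorem16 (Omega : Type) (Alg : set Omega -> Prop) (lam : set Omega -> R)
  (M : (set Omega -> R) -> Prop) (H0 : set Omega -> Prop) :
  is_algebra Alg ->
  is_ba Alg lam ->
  (forall mu, M mu -> is_ba Alg mu /\ abs_cont Alg mu lam) ->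
  (forall X, H0 X -> Alg X) ->
  (exists X, H0 X) ->
  exists Hs : nat -> set Omega,
    (forall n, H0 (Hs n)) /\
    (forall mu A H, M mu -> Alg A -> gen_ring H0 H ->
       outer Alg mu (setI H (Gset Hs)) = 0 /\
       infinite_sum (fun n => mu (setI A (setI H (Gn Hs n)))) (mu (setI A H))) /\
    (forall mu, M mu -> inner_regular Alg H0 mu ->
       forall A, Alg A -> infinite_sum (fun n => mu (setI A (Gn Hs n))) (mu A)) /\
    ((forall S : nat -> set Omega, (forall n, H0 (S n)) -> H0 (fun x => exists n, S n x)) ->
       forall mu A, M mu -> Alg A ->
       exists l, infinite_sum (fun n => mu (setI A (Gn Hs n))) l /\
                 mu A = mu (setI A (Gset Hs)) + l).
Proof.
  intros HA Hb HM HH Hne.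
  assert (Hy : Hyp Alg lam H0) by (split; [|split; [|split]]; auto).
  assert (hU : forall n, Alg (Useq Alg lam H0 n)) by (intro n; apply Useq_alg, Hy).
  assert (key : forall mu B, M mu -> Alg B -> forall eps, 0 < eps -> exists d, 0 < d /\
             (uu Alg lam B < d -> totvar Alg mu B < eps)).
  { intros mu B hm b eps he. destruct (HM mu hm) as [Hm hac].
    destruct (hac eps he) as [d [hd hd']]. exists d. split; auto. intro h.
    apply hd'; auto. eapply Rle_lt_trans; [apply (tv_le_u Alg lam); auto | exact h]. }
  assert (P1 : forall mu A H, M mu -> Alg A -> gen_ring H0 H ->
       outer Alg mu (setI H (Gset (Hseq Alg lam H0))) = 0 /\
       infinite_sum (fun n => mu (setI A (setI H (Gn (Hseq Alg lam H0) n)))) (mu (setI A H))).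
  { intros mu A H hm a hg. destruct (gen_good _ _ _ H Hy hg) as [h hH].
    destruct (HM mu hm) as [Hm hac].
    split.
    - apply Rinf_eq. split.
      + intros r [A' [a' [_ ->]]]. apply (tv_nonneg Alg mu); auto.
      + intros b hb. apply Rnot_lt_le. intro bpos.
        destruct (hac b bpos) as [d [hd hd']].
        destruct (hH d hd) as [N hN]. specialize (hN N (le_n N)).
        assert (hA' : Alg (setD H (Useq Alg lam H0 N))) by (apply (alg_D Alg); auto).
        assert (totvar Alg mu (setD H (Useq Alg lam H0 N)) < b).
        { apply hd'; auto. eapply Rle_lt_trans; [apply (tv_le_u Alg lam); auto | exact hN]. }
        assert (b <= totvar Alg mu (setD H (Useq Alg lam H0 N))).
        { apply hb. exists (setD H (Useq Alg lam H0 N)). split; auto. split; auto.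
          intros x [hx hG]. split; auto. rewrite Useq_char. intros [k [_ hk]]. exact (hG k hk). }
        lra.
    - replace (fun n => mu (setI A (setI H (Gn (Hseq Alg lam H0) n)))) with
        (fun n => mu (setI (setI A H) (Gn (Hseq Alg lam H0) n))).
      2:{ apply functional_extensionality; intro n. f_equal. apply set_ext; intro x; unfold setI; tauto. }
      apply sum_conv; auto. apply (alg_I Alg); auto.
      intros eps he. destruct (hac eps he) as [d [hd hd']].
      destruct (hH d hd) as [N hN]. exists N. intros n hn.
      assert (hB : Alg (setD (setI A H) (Useq Alg lam H0 n))) by (apply (alg_D Alg); auto; apply (alg_I Alg); auto).
      eapply Rle_lt_trans; [apply (abs_le_tv Alg mu); auto|]. apply hd'; auto.
      eapply Rle_lt_trans; [apply (tv_le_u Alg lam); auto|].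
      eapply Rle_lt_trans; [|exact (hN n hn)]. apply u_mono; auto. apply (alg_D Alg); auto.
      intros x [[_ hx] hx']. split; auto. }
  exists (Hseq Alg lam H0). split; [intro n; apply Hseq_H0, Hy|]. split; [exact P1|]. split.
  - intros mu hm hir A a. destruct (HM mu hm) as [Hm hac].
    apply sum_conv; auto. intros eps he.
    destruct (hac (eps/2)) as [d [hd hd']]; [lra|].
    destruct (unif _ _ _ Hy d hd) as [N hN]. exists N. intros n hn.
    set (U := Useq Alg lam H0 n) in *. assert (hUn : Alg U) by apply hU.
    set (B := setD A U). assert (b : Alg B) by (apply (alg_D Alg); auto).
    assert (small : forall X, H0 X -> subset X B -> Rabs (mu X) < eps/2).
    { intros X hX sX. assert (x' : Alg X) by auto.
      eapply Rle_lt_trans; [apply (abs_le_tv Alg mu); auto|]. apply hd'; auto.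
      eapply Rle_lt_trans; [apply (tv_le_u Alg lam); auto|].
      replace X with (setD X U). { apply hN; auto. }
      apply set_ext; intro x; unfold setD; split; [tauto|]. intro h; split; auto.
      destruct (sX x h); auto. }
    destruct (hir B b) as [[_ hp] [_ hn']].
    assert (mu_pos Alg mu B <= eps/2).
    { apply hp. intros r [X [hX [sX ->]]]. pose proof (small X hX sX) as hs.
      apply Rlt_le, abs_bnd in hs. lra. }
    assert (mu_neg Alg mu B <= eps/2).
    { apply hn'. intros r [X [hX [sX ->]]]. pose proof (small X hX sX) as hs.
      apply Rlt_le, abs_bnd in hs. lra. }
    assert (mu B <= mu_pos Alg mu B) by (apply mp_ge; auto; intros x h; auto).
    assert (- mu B <= mu_neg Alg mu B).
    { rewrite mn_eq. apply (mp_ge Alg (fun B => - mu B)); auto. apply ba_neg; auto. intros x h; auto. }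
    apply Rle_lt_trans with (eps/2); [|lra]. apply Rabs_le. lra.
  - intros hcl mu A hm a. destruct (HM mu hm) as [Hm hac]. pose proof Hm as [Hadd _].
    set (V := fun x => exists n, Hseq Alg lam H0 n x).
    assert (hV : H0 V) by (apply hcl; intro n; apply Hseq_H0, Hy).
    assert (vA : Alg V) by auto.
    assert (hg : gen_ring H0 V) by (intros Rg _ h; auto).
    destruct (P1 mu A V hm a hg) as [_ hs].
    exists (mu (setI A V)). split.
    + replace (fun n => mu (setI A (Gn (Hseq Alg lam H0) n))) with
        (fun n => mu (setI A (setI V (Gn (Hseq Alg lam H0) n)))); auto.
      apply functional_extensionality; intro n. f_equal. apply set_ext; intro x.
      unfold setI, V, Gn. split; [tauto|]. intros [h1 [h2 h3]]. split; auto. split; eauto.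
    + replace (Gset (Hseq Alg lam H0)) with (setC V).
      * rewrite <- Hadd; try apply (alg_I Alg); try apply (alg_C Alg); auto.
        -- f_equal. apply set_ext; intro x; unfold setU, setI, setC. destruct (classic (V x)); tauto.
        -- intros x [_ h1] [_ h2]; auto.
      * apply set_ext; intro x; unfold setC, V, Gset. split.
        -- intros h n hn. apply h; eauto.
        -- intros h [n hn]. exact (h n hn).
Qed.
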